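(* Let $G$ be a highly graceful graph. Then $G$ contains no subgraph isomorphic to any of the following graphs: (1) a cycle $C_n$ with $n \equiv 1$ or $2 \pmod 4$; (2) the union of two cycles $C_m$ and $C_n$ with $m, n \equiv 3 \pmod 4$ that have exactly one node in common; (3) the union of three cycles $C_l, C_m, C_n$ with $l \equiv 0 \pmod 4$ and $m, n \equiv 3 \pmod 4$, where $C_m$ and $C_n$ are node-disjoint and $C_l$ has exactly one node in common with each of $C_m$ and $C_n$.
   Context: Graphs are finite, undirected, without loops or multiple edges. A $(p,q)$-graph has $p$ nodes and $q$ edges. A graceful labeling of a $(p,q)$-graph $G$ is an injective map $\varphi: V(G) \to \{0,1,\dots,q\}$ such that the edge labels $|\varphi(u)-\varphi(v)|$, $uv \in E(G)$, are pairwise distinct (hence are exactly $1,\dots,q$); $G$ is graceful if it has a graceful labeling. A graph $G$ is highly graceful if every connected subgraph of $G$ (including $G$ itself) is graceful. *)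

(* Defs.v *)
From mathcomp Require Import all_boot.
Set Implicit Arguments. Unset Strict Implicit. Unset Printing Implicit Defensive.

(* The host graph: a finite simple graph given by a symmetric irreflexive
   relation [g] on a finite vertex type [T]. *)

(* A subgraph (V, E) of g: E is a set of ordered pairs, closed under
   reversal, so that each undirected edge {x,y} is represented by both
   (x,y) and (y,x); edges of E are edges of g with endpoints in V. *)
Definition subgraph (T : finType) (g : rel T) (V : {set T}) (E : {set T * T}) :=
  forall e, e \in E -> [/\ g e.1 e.2, e.1 \in V, e.2 \in V & (e.2, e.1) \in E].

Definition nedges (T : finType) (E : {set T * T}) : nat := #|E| %/ 2.

Definition sub_connected (T : finType) (V : {set T}) (E : {set T * T}) :=
  forall x y, x \in V -> y \in V -> connect (fun a b => (a, b) \in E) x y.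

Definition absdiff (a b : nat) : nat := (a - b) + (b - a).

Definition graceful_labeling (T : finType) (V : {set T}) (E : {set T * T})
    (f : T -> nat) :=
  [/\ {in V &, injective f},
      {in V, forall x, f x <= nedges E} &
      forall x y u v, (x, y) \in E -> (u, v) \in E ->
        absdiff (f x) (f y) = absdiff (f u) (f v) ->
        (u, v) = (x, y) \/ (u, v) = (y, x)].

Definition graceful (T : finType) (V : {set T}) (E : {set T * T}) :=
  exists f : T -> nat, graceful_labeling V E f.

Definition highly_graceful (T : finType) (g : rel T) :=
  forall (V : {set T}) (E : {set T * T}),
    subgraph g V E -> sub_connected V E -> graceful V E.

(* s = [:: v_0; ...; v_{n-1}] spans a subgraph of g isomorphic to the cycle
   C_n (n >= 3): distinct vertices with v_i ~ v_{i+1} and v_{n-1} ~ v_0. *)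
Definition cycle_in (T : finType) (g : rel T) (s : seq T) :=
  [&& 3 <= size s, uniq s & cycle g s].

Definition ncommon (T : finType) (s1 s2 : seq T) : nat :=
  #|[set x | (x \in s1) && (x \in s2)]|.

(* Main.v *)
Require Import Defs.
From mathcomp Require Import all_boot zify.
Set Implicit Arguments. Unset Strict Implicit. Unset Printing Implicit Defensive.

Lemma arith4 q t : q * q.+1 = 4 * t -> q %% 4 = 0 \/ q %% 4 = 3.
Proof.
rewrite {1 2}(divn_eq q 4).
have : q %% 4 < 4 by rewrite ltn_pmod.
move: (q %/ 4) (q %% 4) => k r.
case: r => [|[|[|[|r]]]] //= _; try (left; reflexivity); try (right; reflexivity); nia.
Qed.

Lemma sum_iota1 n : 2 * sumn (iota 1 n) = n * n.+1.
Proof.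
elim: n => // n IH.
have -> : iota 1 n.+1 = iota 1 n ++ [:: 1 + n] by rewrite -[n.+1]addn1 iotaD.
rewrite sumn_cat /=. lia.
Qed.

Lemma sumn_mapD (A : Type) (F G : A -> nat) (L : seq A) :
  sumn (map (fun e => F e + G e) L) = sumn (map F L) + sumn (map G L).
Proof. elim: L => //= a L ->; lia. Qed.

Definition swp (T : Type) (e : T * T) := (e.2, e.1).
Lemma swpK (T : Type) : involutive (@swp T). Proof. by case. Qed.

Definition ER (T : finType) (L : seq (T * T)) : {set T * T} :=
  [set e | e \in L ++ map (@swp T) L].
Definition VR (T : finType) (L : seq (T * T)) : {set T} :=
  [set x | x \in map fst L].
Definition ERr (T : finType) (L : seq (T * T)) := fun a b => (a, b) \in ER L.

Lemma mem_swp (T : eqType) (L : seq (T * T)) e : (e \in map (@swp T) L) = (swp e \in L).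
Proof.
apply/mapP/idP => [[e' He' ->]|H]; first by rewrite swpK.
by exists (swp e); rewrite ?swpK.
Qed.

Lemma memER (T : finType) (L : seq (T * T)) e : (e \in ER L) = (e \in L) || (swp e \in L).
Proof. by rewrite inE mem_cat mem_swp. Qed.

Lemma ERr_sym (T : finType) (L : seq (T * T)) : symmetric (ERr L).
Proof. by move=> a b; rewrite /ERr !memER /swp /= orbC. Qed.

Lemma ERr_mono (T : finType) (L L' : seq (T * T)) : {subset L <= L'} ->
  forall a b, connect (ERr L) a b -> connect (ERr L') a b.
Proof.
move=> sLL'; apply: connect_sub => a b; rewrite /ERr !memER => h.
apply: connect1; rewrite /ERr memER.
by case/orP: h => h; apply/orP; [left|right]; apply: sLL'.
Qed.

Section Main.
Variables (T : finType) (g : rel T).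
Hypotheses (gsym : symmetric g) (girr : irreflexive g).

Definition goodL (L : seq (T * T)) :=
  [/\ uniq L, {in L, forall e, g e.1 e.2}, {in L, forall e, swp e \notin L},
      perm_eq (map fst L) (map snd L) &
      exists r, forall x, x \in map fst L -> connect (ERr L) r x].

Lemma goodL_mod4 L : highly_graceful g -> goodL L -> size L %% 4 = 0 \/ size L %% 4 = 3.
Proof.
move=> hG [uL gL sL pL [r cL]].
have sndV e : e \in L -> e.2 \in map fst L.
  by move=> he; rewrite (perm_mem pL); apply: map_f.
have sub : subgraph g (VR L) (ER L).
  move=> e; rewrite memER => /orP[He|He].
    split; first exact: gL.
    - by rewrite inE map_f.
    - by rewrite inE sndV.
    - by rewrite memER /swp /= -surjective_pairing He orbT.
  have := gL _ He; have := sndV _ He; have := map_f fst He.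
  rewrite /swp /= => h1 h2 h3; split.
  - by rewrite gsym.
  - by rewrite inE.
  - by rewrite inE.
  - by rewrite memER He.
have conn : sub_connected (VR L) (ER L).
  move=> x y; rewrite !inE => hx hy.
  apply: connect_trans (cL y hy).
  rewrite (sym_connect_sym (ERr_sym L)); exact: cL.
have uLL : uniq (L ++ map (@swp T) L).
  rewrite cat_uniq uL (map_inj_uniq (inv_inj (@swpK T))) uL andbT /=.
  apply/hasP => -[e]; rewrite mem_swp => h1 h2.
  by have := sL _ h1; rewrite swpK h2.
have hcard : #|ER L| = (size L).*2.
  by rewrite /ER cardsE (card_uniqP uLL) size_cat size_map addnn.
have nE : nedges (ER L) = size L by rewrite /nedges hcard -mul2n mulKn.
case: (hG _ _ sub conn) => f [finj fle flab].
rewrite nE in fle.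
pose lab := fun e : T * T => absdiff (f e.1) (f e.2).
have Lin e : e \in L -> e \in ER L by move=> he; rewrite memER he.
have uLab : uniq (map lab L).
  rewrite map_inj_in_uniq // => -[x y] [u v] h1 h2 heq.
  case: (flab _ _ _ _ (Lin _ h1) (Lin _ h2) heq) => // E.
  by have := sL _ h1; rewrite /swp /= -E h2.
have rng e : e \in L -> 0 < lab e <= size L.
  case: e => x y he; have ge := gL _ he; rewrite /= in ge.
  have ne : x != y by apply: contraTneq ge => ->; rewrite girr.
  have V1 : x \in VR L by rewrite inE (map_f fst he).
  have V2 : y \in VR L by rewrite inE (sndV _ he).
  have nf : f x != f y by apply: contra ne => /eqP /finj -> //.
  have := fle _ V1; have := fle _ V2; move: nf => /eqP nf; rewrite /lab /absdiff /=; lia.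
have pr : perm_eq (map lab L) (iota 1 (size L)).
  apply: uniq_perm => //; first exact: iota_uniq.
  have hs : {subset map lab L <= iota 1 (size L)}.
    move=> x /mapP[e he ->]; rewrite mem_iota; have := rng _ he; lia.
  have hz : size (iota 1 (size L)) <= size (map lab L) by rewrite size_iota size_map.
  exact: (uniq_min_size uLab hs hz).2.
have S1 : 2 * sumn (map lab L) = size L * (size L).+1.
  by rewrite (perm_sumn pr) sum_iota1.
have S2 : sumn (map lab L) + 2 * sumn (map (fun e => minn (f e.1) (f e.2)) L)
   = sumn (map (fun e => f e.1) L) + sumn (map (fun e => f e.2) L).
  rewrite -sumn_mapD.
  elim: (L) => //= -[x y] L' IH; rewrite /lab /absdiff /= in IH *. lia.
have S3 : sumn (map (fun e => f e.1) L) = sumn (map (fun e => f e.2) L).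
  have -> : map (fun e => f e.1) L = map f (map fst L) by rewrite -map_comp.
  have -> : map (fun e => f e.2) L = map f (map snd L) by rewrite -map_comp.
  by apply: perm_sumn; apply: perm_map.
apply: (@arith4 _ (sumn (map (fun e => f e.1) L) - sumn (map (fun e => minn (f e.1) (f e.2)) L))).
lia.
Qed.


Definition cedges (s : seq T) := map (fun x => (x, next s x)) s.

Lemma cedges_fst s : map fst (cedges s) = s.
Proof. by rewrite /cedges -map_comp; exact: map_id. Qed.

Lemma nn_neq (s : seq T) (x : T) : uniq s -> 3 <= size s -> x \in s -> next s (next s x) != x.
Proof.
move=> us ss hx; case: (rot_to hx) => i p hr.
rewrite -!(next_rot i us) hr.
have up : uniq (x :: p) by rewrite -hr rot_uniq.
have sp : 3 <= size (x :: p) by rewrite -hr size_rot.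
case: p up sp hr => [|y [|z r]] up sp _; [done|done|].
have := cycle_next up; rewrite /= => /and3P[/eqP -> /eqP -> _].
move: up; rewrite /= !inE => /andP[h _]; apply: contraNneq h => ->; by rewrite eqxx !(orbT, orTb).
Qed.

Lemma cyc_good s : cycle_in g s -> goodL (cedges s).
Proof.
case/and3P => ss us cs.
split.
- by apply: (@map_uniq _ _ fst); rewrite cedges_fst.
- by move=> e /mapP[x hx ->] /=; apply: next_cycle.
- move=> e /mapP[x hx ->]; apply/negP => /mapP[y hy [e1 e2]].
  by move: (nn_neq us ss hx); rewrite e1 -e2 eqxx.
- rewrite cedges_fst /cedges -map_comp.
  have um : uniq (map (next s) s) by rewrite (map_inj_uniq (can_inj (prev_next us))).
  apply: uniq_perm => //.
  have hs : {subset map (next s) s <= s} by move=> y /mapP[z hz ->]; rewrite mem_next.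
  have hz : size s <= size (map (next s) s) by rewrite size_map.
  by move=> y; rewrite (uniq_min_size um hs hz).2.
- case: s ss us cs => [|x p] // ss us cs.
  exists x => y; rewrite cedges_fst => hy.
  apply: (path_connect _ hy).
  have := cycle_next us; rewrite /= rcons_path => /andP[hp _].
  apply: (sub_in_path (P := mem (x :: p))) hp; last by apply/allP.
  move=> a b ha hb /= /eqP <-.
  by rewrite /ERr memER /cedges map_f.
Qed.

Lemma two_common (s1 s2 : seq T) (y z : T) : y \in s1 -> y \in s2 -> z \in s1 -> z \in s2 -> y != z ->
  2 <= ncommon s1 s2.
Proof.
move=> a b c d ne.
have <- : #|[set y; z]| = 2 by rewrite cards2 ne.
apply: subset_leq_card; apply/subsetP => w; rewrite !inE.
by case/orP => /eqP ->; rewrite ?a ?b ?c ?d.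
Qed.

Lemma cyc_disj s1 s2 : cycle_in g s1 -> cycle_in g s2 -> ncommon s1 s2 <= 1 ->
  forall e, e \in cedges s2 -> (e \notin cedges s1) && (swp e \notin cedges s1).
Proof.
move=> /and3P[_ _ c1] /and3P[_ _ c2] hn e /mapP[y hy ->].
have gy := next_cycle c2 hy.
have ne : y != next s2 y by apply: contraTneq gy => <-; rewrite girr.
have hy2 : next s2 y \in s2 by rewrite mem_next.
apply/andP; split; apply/negP => /mapP[x hx [e1 e2]].
- subst y. have h1 : next s2 x \in s1 by rewrite e2 mem_next.
  have := two_common hx hy h1 hy2 ne. lia.
- have h1 : y \in s1 by rewrite e2 mem_next.
  have h2 : next s2 y \in s1 by rewrite e1.
  have := two_common h1 hy h2 hy2 ne. lia.
Qed.

Lemma cat_good L1 L2 : goodL L1 -> goodL L2 ->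
  (forall e, e \in L2 -> (e \notin L1) && (swp e \notin L1)) ->
  (exists c, (c \in map fst L1) && (c \in map fst L2)) -> goodL (L1 ++ L2).
Proof.
move=> [u1 g1 s1 p1 [r1 c1]] [u2 g2 s2 p2 [r2 c2]] dj [c /andP[hc1 hc2]].
split.
- rewrite cat_uniq u1 u2 andbT /=; apply/hasP => -[e he /= he1].
  by have := dj _ he; rewrite he1.
- by move=> e; rewrite mem_cat => /orP[h|h]; [apply: g1|apply: g2].
- move=> e; rewrite !mem_cat => /orP[h|h]; apply/negP => /orP[h'|h'].
  + by have := s1 _ h; rewrite h'.
  + by have := dj _ h'; rewrite swpK h andbF.
  + by have := dj _ h; rewrite h' andbF.
  + by have := s2 _ h; rewrite h'.
- by rewrite !map_cat; apply: perm_cat.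
- have m1 : {subset L1 <= L1 ++ L2} by move=> e h; rewrite mem_cat h.
  have m2 : {subset L2 <= L1 ++ L2} by move=> e h; rewrite mem_cat h orbT.
  exists r1 => x; rewrite map_cat mem_cat => /orP[h|h].
    by apply: ERr_mono m1 _ _ (c1 _ h).
  apply: connect_trans (ERr_mono m1 (c1 _ hc1)) _.
  apply: connect_trans (ERr_mono m2 (c2 _ h)).
  apply: ERr_mono m2 _ _ _.
  by rewrite (sym_connect_sym (ERr_sym L2)); apply: c2.
Qed.

End Main.
Theorem proposition3p1 (T : finType) (g : rel T)
    (gsym : symmetric g) (girr : irreflexive g) (hG : highly_graceful g) :
  [/\ ~ (exists s, cycle_in g s /\ (size s %% 4 = 1 \/ size s %% 4 = 2)),
      ~ (exists s1 s2, [/\ cycle_in g s1, cycle_in g s2,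
            size s1 %% 4 = 3, size s2 %% 4 = 3 & ncommon s1 s2 = 1]) &
      ~ (exists sl sm sn, [/\ cycle_in g sl, cycle_in g sm, cycle_in g sn,
            [/\ size sl %% 4 = 0, size sm %% 4 = 3 & size sn %% 4 = 3] &
            [/\ ncommon sm sn = 0, ncommon sl sm = 1 & ncommon sl sn = 1]])].
Proof.
have common (s1 s2 : seq T) : ncommon s1 s2 = 1 ->
    exists c, (c \in map fst (cedges s1)) && (c \in map fst (cedges s2)).
  move=> h; have : 0 < ncommon s1 s2 by rewrite h.
  by case/card_gt0P => c; rewrite inE => hc; exists c; rewrite !cedges_fst.
split.
- case=> s [cs hm].
  have := goodL_mod4 gsym girr hG (cyc_good cs); rewrite size_map. lia.
- case=> s1 [s2 [c1 c2 h1 h2 hn]].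
  have hn' : ncommon s1 s2 <= 1 by rewrite hn.
  have := goodL_mod4 gsym girr hG (cat_good (cyc_good c1) (cyc_good c2)
     (cyc_disj girr c1 c2 hn') (common _ _ hn)).
  rewrite size_cat !size_map. by rewrite -modnDm h1 h2; case.
- case=> sl [sm [sn [cl cm cn [hl hm hn] [hmn hlm hln]]]].
  have hlm' : ncommon sl sm <= 1 by rewrite hlm.
  have hln' : ncommon sl sn <= 1 by rewrite hln.
  have hmn' : ncommon sm sn <= 1 by rewrite hmn.
  have dj e : e \in cedges sn -> (e \notin cedges sl ++ cedges sm) &&
                                  (swp e \notin cedges sl ++ cedges sm).
    move=> he.
    have /andP[a b] := cyc_disj girr cl cn hln' he.
    have /andP[c d] := cyc_disj girr cm cn hmn' he.
    by rewrite !mem_cat !negb_or a b c d.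
  have cm3 : exists c, (c \in map fst (cedges sl ++ cedges sm)) && (c \in map fst (cedges sn)).
    have [c /andP[x y]] := common _ _ hln.
    by exists c; rewrite map_cat mem_cat x y.
  have := goodL_mod4 gsym girr hG (cat_good (cat_good (cyc_good cl) (cyc_good cm)
     (cyc_disj girr cl cm hlm') (common _ _ hlm)) (cyc_good cn) dj cm3).
  rewrite !size_cat !size_map. by rewrite -modnDm -(modnDm (size sl)) hl hm hn; case.
Qed.
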